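(* Let $\{\omega_n\}_{n\ge0}$ be a sequence in $\mathbb{T}$ with the repetition property. Then for every $\alpha\in\mathbb{T}$, the sequences $\{\omega_n\}_{n\ge0}$ and $\{\alpha n\}_{n\ge0}$ have the joint repetition property. Consequently, for every $\alpha,\beta\in\mathbb{T}$, the sequences $\{\omega_n\}_{n\ge0}$ and $\{\omega_n+\alpha n+\beta\}_{n\ge0}$ have the joint repetition property.
   Context: $\mathbb{T}=\mathbb{R}/\mathbb{Z}$ with metric $\mathrm{dist}(x,y)=\langle x-y\rangle$, where $\langle\tau\rangle=\min\{|\hat\tau-p|:p\in\mathbb{Z}\}$ for any representative $\hat\tau\in\mathbb{R}$ of $\tau$. $\mathbb{Z}_+=\{1,2,\ldots\}$. A sequence $\{\omega_n\}_{n\ge0}$ in a metric space $\Omega$ has the repetition property if for every $\varepsilon>0$ and $r \in \mathbb{Z}_+$ there exists $q \in \mathbb{Z}_+$ such that $\mathrm{dist}(\omega_n,\omega_{n+q}) < \varepsilon$ for $n = 0,1,\ldots, rq$. A family of sequences $\{\omega^{(\gamma)}_n\}_{n\ge0}$ in metric spaces $\Omega^{(\gamma)}$, $\gamma\in\Gamma$, has the joint repetition property if each of them has the repetition property and, for each finite subfamily and each $\varepsilon>0$, $r\in\mathbb{Z}_+$, a single $q\in\mathbb{Z}_+$ can be chosen that works simultaneously for all sequences in the subfamily. *)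

(* Defs.v *)
From Stdlib Require Import Reals List.
Open Scope R_scope.

(* The circle T = R/Z: an element of T is represented by any real
   representative; all notions below depend only on the classes mod Z. *)

(* <tau> = min{ |tau - p| : p in Z }, computed via the floor (Int_part). *)
Definition tnorm (tau : R) : R :=
  let f := tau - IZR (Int_part tau) in Rmin f (1 - f).

Definition tdist (x y : R) : R := tnorm (x - y).

Definition repetition {X : Type} (d : X -> X -> R) (w : nat -> X) : Prop :=
  forall (eps : R) (r : nat), 0 < eps -> (1 <= r)%nat ->
    exists q : nat, (1 <= q)%nat /\
      forall n : nat, (n <= r * q)%nat -> d (w n) (w (n + q)%nat) < eps.

Definition joint_repetition {X I : Type} (d : X -> X -> R) (w : I -> nat -> X) : Prop :=
  (forall i, repetition d (w i)) /\
  forall (F : list I) (eps : R) (r : nat), 0 < eps -> (1 <= r)%nat ->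
    exists q : nat, (1 <= q)%nat /\
      forall i, In i F ->
        forall n : nat, (n <= r * q)%nat -> d (w i n) (w i (n + q)%nat) < eps.

Definition pair_seq {X : Type} (u v : nat -> X) : bool -> nat -> X :=
  fun b => if b then u else v.

(* Main.v *)
Require Import Defs.
From Stdlib Require Import Reals List Lra Lia ZArith Classical.
Open Scope R_scope.

Lemma tnorm_le x p : tnorm x <= Rabs (x - IZR p).
Proof.
  unfold tnorm. destruct (base_Int_part x) as [H1 H2].
  remember (Int_part x) as k eqn:Ek.
  assert (Hz : (k - p = 0 \/ 1 <= k - p \/ k - p <= -1)%Z) by lia.
  replace (x - IZR p) with ((x - IZR k) + IZR (k - p)) by (rewrite minus_IZR; ring).
  destruct Hz as [Hz|[Hz|Hz]].
  - rewrite Hz. rewrite Rplus_0_r, Rabs_right by lra. apply Rmin_l.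
  - apply IZR_le in Hz. rewrite Rabs_right by lra. eapply Rle_trans. apply Rmin_l. lra.
  - apply IZR_le in Hz. rewrite Rabs_left by lra. eapply Rle_trans. apply Rmin_r. lra.
Qed.

Lemma tnorm_ex x : exists p, tnorm x = Rabs (x - IZR p).
Proof.
  unfold tnorm. destruct (base_Int_part x) as [H1 H2].
  remember (Int_part x) as k eqn:Ek.
  destruct (Rle_dec (x - IZR k) (1 - (x - IZR k))).
  - exists k. rewrite Rmin_left by lra. rewrite Rabs_right by lra. reflexivity.
  - exists (k+1)%Z. rewrite Rmin_right by lra. rewrite plus_IZR. rewrite Rabs_left by lra. ring.
Qed.

Lemma tnorm_nonneg x : 0 <= tnorm x.
Proof. destruct (tnorm_ex x) as [p ->]. apply Rabs_pos. Qed.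

Lemma tnorm_0 : tnorm 0 = 0.
Proof. apply Rle_antisym. 2: apply tnorm_nonneg.
  eapply Rle_trans. apply (tnorm_le 0 0). rewrite Rminus_0_r, Rabs_R0. lra. Qed.

Lemma tnorm_tri a b : tnorm (a + b) <= tnorm a + tnorm b.
Proof.
  destruct (tnorm_ex a) as [p ->]. destruct (tnorm_ex b) as [p' ->].
  eapply Rle_trans. apply (tnorm_le _ (p + p')).
  rewrite plus_IZR. replace (a + b - (IZR p + IZR p')) with ((a - IZR p) + (b - IZR p')) by ring.
  apply Rabs_triang.
Qed.

Lemma tnorm_opp x : tnorm (- x) = tnorm x.
Proof.
  apply Rle_antisym.
  - destruct (tnorm_ex x) as [p ->]. eapply Rle_trans. apply (tnorm_le _ (- p)).
    rewrite opp_IZR. replace (- x - - IZR p) with (- (x - IZR p)) by ring. rewrite Rabs_Ropp; lra.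
  - destruct (tnorm_ex (-x)) as [p ->]. eapply Rle_trans. apply (tnorm_le _ (- p)).
    rewrite opp_IZR. replace (x - - IZR p) with (- (- x - IZR p)) by ring. rewrite Rabs_Ropp; lra.
Qed.

Lemma tnorm_int x p : tnorm (x + IZR p) = tnorm x.
Proof.
  apply Rle_antisym.
  - destruct (tnorm_ex x) as [p' ->]. eapply Rle_trans. apply (tnorm_le _ (p' + p)).
    rewrite plus_IZR. replace (x + IZR p - (IZR p' + IZR p)) with (x - IZR p') by ring. lra.
  - destruct (tnorm_ex (x + IZR p)) as [p' ->]. eapply Rle_trans. apply (tnorm_le _ (p' - p)).
    rewrite minus_IZR. replace (x - (IZR p' - IZR p)) with (x + IZR p - IZR p') by ring. lra.
Qed.

Lemma pigeon M : forall f : nat -> nat, (forall k, (k <= M)%nat -> (f k < M)%nat) ->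
  exists i j, (i < j <= M)%nat /\ f i = f j.
Proof.
  induction M as [|M IH]; intros f Hf.
  - specialize (Hf 0%nat (le_n 0)). lia.
  - remember (f (S M)) as c eqn:Ec.
    destruct (classic (exists k, (k <= M)%nat /\ f k = c)) as [[k [Hk Hk']]|Hn].
    + exists k, (S M). split; [lia| congruence].
    + pose (g := fun k => if Nat.ltb (f k) c then f k else (f k - 1)%nat).
      destruct (IH g) as [i [j [Hij Hg]]].
      * intros k Hk. unfold g. assert (f k <> c) by (intro; apply Hn; eauto).
        assert (f k < S M)%nat by (apply Hf; lia). assert (c < S M)%nat by (rewrite Ec; apply Hf; lia).
        destruct (Nat.ltb_spec (f k) c); lia.
      * exists i, j. split; [lia|]. unfold g in Hg.
        assert (f i <> c) by (intro; apply Hn; exists i; split; [lia|auto]).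
        assert (f j <> c) by (intro; apply Hn; exists j; split; [lia|auto]).
        destruct (Nat.ltb_spec (f i) c); destruct (Nat.ltb_spec (f j) c); lia.
Qed.

Lemma box_bound (M : nat) (y : R) : (1 <= M)%nat -> 0 <= y < 1 ->
  (0 <= Int_part (INR M * y) < Z.of_nat M)%Z.
Proof.
  intros HM Hy. destruct (base_Int_part (INR M * y)) as [H1 H2].
  assert (HM' : 1 <= INR M) by (apply (le_INR 1); auto).
  assert (0 <= INR M * y) by nra. assert (INR M * y < INR M) by nra.
  split.
  - apply Z.lt_succ_r. apply lt_IZR. rewrite succ_IZR. simpl. lra.
  - apply lt_IZR. rewrite <- INR_IZR_INZ. lra.
Qed.

Lemma dirichlet (M : nat) (x : nat -> R) : (1 <= M)%nat ->
  exists i j, (i < j <= M)%nat /\ tnorm (x j - x i) < / INR M.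
Proof.
  intros HM.
  pose (f := fun k => x k - IZR (Int_part (x k))).
  assert (Hf : forall k, 0 <= f k < 1).
  { intro k. unfold f. destruct (base_Int_part (x k)). lra. }
  pose (b := fun k => Z.to_nat (Int_part (INR M * f k))).
  destruct (pigeon M b) as [i [j [Hij Hb]]].
  { intros k _. unfold b. destruct (box_bound M (f k) HM (Hf k)). lia. }
  exists i, j. split; [exact Hij|].
  unfold b in Hb. destruct (box_bound M (f i) HM (Hf i)). destruct (box_bound M (f j) HM (Hf j)).
  apply Znat.Z2Nat.inj in Hb; try lia.
  destruct (base_Int_part (INR M * f i)). destruct (base_Int_part (INR M * f j)).
  rewrite Hb in *.
  assert (HM' : 1 <= INR M) by (apply (le_INR 1); auto).
  assert (Hm : -1 < INR M * (f j - f i) < 1).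
  { rewrite Rmult_minus_distr_l. lra. }
  assert (Hd : Rabs (f j - f i) < / INR M).
  { apply Rabs_def1.
    - apply (Rmult_lt_reg_l (INR M)); [lra|]. rewrite Rinv_r by lra. lra.
    - apply (Rmult_lt_reg_l (INR M)); [lra|].
      replace (INR M * - / INR M) with (-1) by (field; lra). lra. }
  replace (x j - x i) with ((f j - f i) + IZR (Int_part (x j) - Int_part (x i))).
  2:{ unfold f. rewrite minus_IZR. ring. }
  rewrite tnorm_int. eapply Rle_lt_trans. apply (tnorm_le _ 0). rewrite Rminus_0_r. exact Hd.
Qed.

Lemma chain (w : nat -> R) e Rr q :
  (forall m, (m <= Rr * q)%nat -> tnorm (w m - w (m + q)%nat) < e) ->
  forall k n, (n + k * q <= Rr * q + q)%nat -> tnorm (w n - w (n + k * q)%nat) <= INR k * e.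
Proof.
  intros H k. induction k as [|k IH]; intros n Hn.
  - simpl. rewrite Nat.add_0_r, Rminus_diag, tnorm_0. lra.
  - replace (w n - w (n + S k * q)%nat) with ((w n - w (n + k * q)%nat) + (w (n + k*q)%nat - w (n + k * q + q)%nat)).
    2:{ replace (n + k * q + q)%nat with (n + S k * q)%nat by lia. ring. }
    eapply Rle_trans. apply tnorm_tri. rewrite S_INR.
    assert (tnorm (w (n + k * q)%nat - w (n + k * q + q)%nat) < e) by (apply H; nia).
    specialize (IH n ltac:(nia)). lra.
Qed.

Lemma master (w : nat -> R) : repetition tdist w -> forall alpha eps r, 0 < eps -> (1 <= r)%nat ->
  exists q, (1 <= q)%nat /\ forall n, (n <= r * q)%nat ->
    tnorm (w n - w (n + q)%nat) < eps /\ tnorm (alpha * INR n - alpha * INR (n + q)) < eps.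
Proof.
  intros Hw alpha eps r He Hr.
  destruct (archimed_cor1 eps He) as [M [HM1 HM2]].
  assert (HMr : 0 < INR M) by (apply lt_0_INR; lia).
  pose (e := eps / (INR M + 1)).
  assert (He' : 0 < e) by (unfold e; apply Rdiv_lt_0_compat; lra).
  destruct (Hw e ((r + 1) * M)%nat He' ltac:(nia)) as [q [Hq1 Hq]].
  unfold tdist in Hq.
  destruct (dirichlet M (fun k => alpha * INR k * INR q) ltac:(lia)) as [i [j [Hij Hd]]].
  exists ((j - i) * q)%nat. split; [nia|].
  intros n Hn. split.
  - eapply Rle_lt_trans. apply (chain w e ((r+1)*M) q Hq (j - i) n). nia.
    assert (INR (j - i) <= INR M) by (apply le_INR; lia).
    apply Rle_lt_trans with (INR M * e). apply Rmult_le_compat_r; lra.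
    unfold e. apply (Rmult_lt_reg_r (INR M + 1)); [lra|].
    replace (INR M * (eps / (INR M + 1)) * (INR M + 1)) with (INR M * eps) by (field; lra). nra.
  - replace (alpha * INR n - alpha * INR (n + (j - i) * q)) with
      (- (alpha * INR j * INR q - alpha * INR i * INR q)).
    2:{ rewrite plus_INR, mult_INR, minus_INR by lia. ring. }
    rewrite tnorm_opp. lra.
Qed.

Lemma joint_pair (u v : nat -> R) :
  (forall eps r, 0 < eps -> (1 <= r)%nat -> exists q, (1 <= q)%nat /\ forall n, (n <= r * q)%nat ->
     tdist (u n) (u (n + q)%nat) < eps /\ tdist (v n) (v (n + q)%nat) < eps) ->
  joint_repetition tdist (pair_seq u v).
Proof.
  intros H. split.
  - intros b eps r He Hr. destruct (H eps r He Hr) as [q [Hq1 Hq]].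
    exists q. split; auto. intros n Hn. destruct b; simpl; apply Hq; auto.
  - intros F eps r He Hr. destruct (H eps r He Hr) as [q [Hq1 Hq]].
    exists q. split; auto. intros b _ n Hn. destruct b; simpl; apply Hq; auto.
Qed.

Theorem lemma3p2 (w : nat -> R) :
  repetition tdist w ->
  (forall alpha : R,
     joint_repetition tdist (pair_seq w (fun n => alpha * INR n))) /\
  (forall alpha beta : R,
     joint_repetition tdist (pair_seq w (fun n => w n + alpha * INR n + beta))).
Proof.
  intros Hw. split.
  - intros alpha. apply joint_pair. intros eps r He Hr.
    destruct (master w Hw alpha eps r He Hr) as [q [Hq1 Hq]].
    exists q. split; auto.
  - intros alpha beta. apply joint_pair. intros eps r He Hr.
    destruct (master w Hw alpha (eps/2) r ltac:(lra) Hr) as [q [Hq1 Hq]].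
    exists q. split; auto. intros n Hn. destruct (Hq n Hn) as [A B].
    unfold tdist. split. lra.
    replace (w n + alpha * INR n + beta - (w (n + q)%nat + alpha * INR (n + q) + beta))
      with ((w n - w (n + q)%nat) + (alpha * INR n - alpha * INR (n + q))) by ring.
    eapply Rle_lt_trans. apply tnorm_tri. lra.
Qed.
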